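(* Consider the rooted labelled tree (Catalan generating tree) in which the root has label $s\ge 2$ and every node with label $j$ has exactly $j$ children, with labels $2,3,\dots,j+1$. For $m\ge 1$ let $X^{(s)}_m$ be the label of a node chosen uniformly at random among the nodes at depth $m$ (the root having depth $0$). Then $$\mathbf{E}\big[X^{(s)}_m\big]<4+\frac{2s}{m}.$$
   Context: The labels record the number of valid insertion positions: in the tree of $321$-avoiding permutations built by inserting the new maximal entry, a permutation with $j$ valid insertion positions has $j$ children, whose numbers of valid insertion positions are $2,3,\dots,j+1$. *)

(* Defs.v *)
From mathcomp Require Import all_boot all_order all_algebra.
Set Implicit Arguments. Unset Strict Implicit. Unset Printing Implicit Defensive.

(* Catalan generating tree with root label s: a node with label j has
   j children with labels 2, 3, ..., j+1 (= iota 2 j).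
   [level s m] is the multiset (as a list) of labels of all nodes at depth m. *)
Fixpoint level (s m : nat) : seq nat :=
  match m with
  | 0 => [:: s]
  | m'.+1 => flatten [seq iota 2 j | j <- level s m']
  end.

Definition expected_label (s m : nat) : rat :=
  ((sumn (level s m))%:R / (size (level s m))%:R)%R.

(* Main.v *)
Require Import Defs.
From mathcomp Require Import all_boot all_order all_algebra.
From mathcomp Require Import zify ring.
Import Order.TTheory GRing.Theory Num.Theory.

Definition Fst (L : seq nat) : seq nat := flatten [seq iota 2 j | j <- L].

Lemma level_iter s m : level s m = iter m Fst [:: s].
Proof. by elim: m => //= m ->. Qed.

Lemma Fst_cat a b : Fst (a ++ b) = Fst a ++ Fst b.
Proof. by rewrite /Fst map_cat flatten_cat. Qed.

Lemma iter_cat m a b : iter m Fst (a ++ b) = iter m Fst a ++ iter m Fst b.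
Proof. by elim: m => //= m ->; rewrite Fst_cat. Qed.

Lemma iter_nil m : iter m Fst [::] = [::].
Proof. by elim: m => //= m ->. Qed.

Lemma size_Fst L : size (Fst L) = sumn L.
Proof.
rewrite /Fst size_flatten /shape -map_comp.
by elim: L => //= x L ->; rewrite size_iota.
Qed.

Definition N s m := size (level s m).

Lemma N0 s : N s 0 = 1. Proof. by []. Qed.

Lemma NS0 m : N 0 m.+1 = 0.
Proof. by rewrite /N level_iter iterSr /= iter_nil. Qed.

Lemma NSS s m : N s.+1 m.+1 = N s m.+1 + N s.+2 m.
Proof.
rewrite /N !level_iter !iterSr.
have -> : Fst [:: s.+1] = iota 2 s ++ [:: s.+2].
  by rewrite /Fst; change (iota 2 s.+1 ++ [::] = iota 2 s ++ [:: s.+2]); rewrite cats0 -(addn1 s) iotaD add2n addn1.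
have -> : Fst [:: s] = iota 2 s by rewrite /Fst /= cats0.
by rewrite iter_cat size_cat.
Qed.

Lemma sum_level s m : sumn (level s m) = N s m.+1.
Proof. by rewrite /N /= -/(Fst _) size_Fst. Qed.

Definition G t m := N t.+1 m.

Lemma G_closed m t : G t m * m`! * (m + t + 1)`! = t.+1 * (2 * m + t)`!.
Proof.
elim: m t => [|m IH] t.
  by rewrite /G N0 fact0 add0n mul1n addn1 factS mul1n.
elim: t => [|t IHt].
  rewrite /G (NSS 0 m) NS0 add0n -/(G 1 m).
  have H := IH 1.
  have -> : (m.+1 + 0 + 1) = (m + 1 + 1) by lia.
  have -> : (2 * m.+1 + 0) = (2 * m + 1).+1 by lia.
  rewrite (factS m) (factS (2 * m + 1)).
  have -> : (2 * m + 1).+1 = 2 * (m.+1) by lia.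
  nia.
rewrite /G NSS -/(G t m.+1) -/(G t.+2 m).
have H := IH t.+2.
move: IHt H.
have -> : (m.+1 + t + 1) = (m + t + 2) by lia.
have -> : (m.+1 + t.+1 + 1) = (m + t + 2).+1 by lia.
have -> : (m + t.+2 + 1) = (m + t + 2).+1 by lia.
have -> : (2 * m.+1 + t) = (2 * m + t.+2) by lia.
have -> : (2 * m.+1 + t.+1) = (2 * m + t.+2).+1 by lia.
rewrite (factS m) (factS (m + t + 2)) (factS (2 * m + t.+2)).
set A := m`!. set B := (m + t + 2)`!. set C := (2 * m + t.+2)`!.
move=> IHt H.
nia.
Qed.

Lemma G_ratio t m : G t m.+1 * (m.+1 * (m + t + 2)) = G t m * ((2 * m + t + 2) * (2 * m + t + 1)).
Proof.
have H1 := G_closed m.+1 t. have H2 := G_closed m t.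
move: H1 H2.
have -> : (m.+1 + t + 1) = (m + t + 1).+1 by lia.
have -> : (2 * m.+1 + t) = (2 * m + t).+2 by lia.
rewrite (factS m) (factS (m + t + 1)) (factS (2 * m + t).+1) (factS (2 * m + t)).
set A := m`!. set B := (m + t + 1)`!. set C := (2 * m + t)`!.
move=> H1 H2.
have Apos : 0 < A by apply: fact_gt0.
have Bpos : 0 < B by apply: fact_gt0.
have AB : 0 < A * B by rewrite muln_gt0 Apos Bpos.
apply/eqP; rewrite -(eqn_pmul2r AB); apply/eqP.
have e0 : (m + t + 1).+1 = m + t + 2 by lia.
have e1 : (2 * m + t).+2 = 2 * m + t + 2 by lia.
have e2 : (2 * m + t).+1 = 2 * m + t + 1 by lia.
rewrite e0 e1 e2 in H1.
transitivity (G t m.+1 * (m.+1 * A) * ((m + t + 2) * B)); first ring.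
rewrite H1.
transitivity (G t m * A * B * ((2 * m + t + 2) * (2 * m + t + 1))); last ring.
rewrite H2; ring.

Qed.

Lemma G_pos t m : 0 < G t m.
Proof.
have H := G_closed m t.
have : 0 < t.+1 * (2 * m + t)`! by rewrite muln_gt0 fact_gt0.
rewrite -H; case: (G t m) => //; by rewrite !mul0n.
Qed.

Theorem mainTheorem6 (s m : nat) (hs : (2 <= s)%N) (hm : (1 <= m)%N) :
  (expected_label s m < 4%:R + 2%:R * s%:R / m%:R)%R.
Proof.
case: s hs => // t _.
rewrite /expected_label sum_level -/(N t.+1 m) -/(G t m.+1) -/(G t m).
have Gp := G_pos t m.
have R := G_ratio t m.
have key : G t m.+1 * m < (4 * m + 2 * t.+1) * G t m.
  have ineq : m * ((2 * m + t + 2) * (2 * m + t + 1)) <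
              (4 * m + 2 * t.+1) * (m.+1 * (m + t + 2)) by nia.
  have K : 0 < m.+1 * (m + t + 2) by lia.
  rewrite -(ltn_pmul2r K).
  have -> : G t m.+1 * m * (m.+1 * (m + t + 2)) = m * (G t m.+1 * (m.+1 * (m + t + 2))) by ring.
  rewrite R.
  have -> : (4 * m + 2 * t.+1) * G t m * (m.+1 * (m + t + 2)) =
    G t m * ((4 * m + 2 * t.+1) * (m.+1 * (m + t + 2))) by ring.
  have -> : m * (G t m * ((2 * m + t + 2) * (2 * m + t + 1))) =
    G t m * (m * ((2 * m + t + 2) * (2 * m + t + 1))) by ring.
  by rewrite ltn_pmul2l.
have mpos : (0 < m%:R :> rat)%R by rewrite ltr0n.
have Gpos : (0 < (G t m)%:R :> rat)%R by rewrite ltr0n.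
rewrite ltr_pdivrMr //.
have -> : ((4%:R + 2%:R * (t.+1)%:R / m%:R) * (G t m)%:R : rat)%R =
          (((4 * m + 2 * t.+1) * G t m)%:R / m%:R)%R.
  rewrite !natrM natrD !natrM; field.
  by rewrite lt0r_neq0.
rewrite ltr_pdivlMr // -natrM ltr_nat.
exact: key.
Qed.
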